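(* In the algebra $\mathbb C\langle\langle\mathbb C_n\rangle\rangle$ of noncommutative formal power series over the alphabet $\mathbb C_n$, $$\sum_{S\vDash n}\underline{M_S}=\sum_{E\subseteq\{1,\dots,n\}}A_{n-\#E}(0,1,1,\dots)\,\underline{\mathbb T_E},$$ where the left sum runs over all set partitions $S$ of $\{1,\dots,n\}$.
   Context: $\mathbb C_n=\{c_E\mid E\subseteq\{1,\dots,n\}\}$. For a family $S$ of pairwise disjoint nonempty subsets of $\{1,\dots,n\}$ (written $S\subset_{\vDash}E$ if all its members lie in $E$), $M_S=(\{c_\emptyset\}\cup\{c_s\mid s\in S\})^*$. For $E\subseteq\{1,\dots,n\}$, $\mathbb T_E=\bigcup_{S\subset_{\vDash}E}M_S$ (words encoding, column by column, saturated tableaux whose marked rows all lie in $E$). For a language $L$, $\underline{L}=\sum_{w\in L}w$ is its characteristic series. $A_k(0,1,1,\dots)$ is the complete Bell polynomial evaluated at $a_1=0$, $a_i=1$ ($i\ge2$), i.e. the number of set partitions of a $k$-element set with no singleton block ($A_0=1$); its exponential generating function is $\exp(e^t-1-t)$. *)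

(* Defs.v *)
From HB Require Import structures.
From mathcomp Require Import all_boot all_order all_algebra all_field.
Set Implicit Arguments. Unset Strict Implicit. Unset Printing Implicit Defensive.
Import Order.TTheory GRing.Theory Num.Theory.
Local Open Scope ring_scope.

(* The ground set {1,...,n} is modelled by 'I_n = {0,...,n-1}.
   The alphabet C_n = {c_E | E subset of {1..n}} is modelled by {set 'I_n}
   (the letter c_E is the set E itself). *)
Definition word (n : nat) := seq {set 'I_n}.

(* Noncommutative formal power series over C_n with complex coefficients
   (algC, the algebraic complex numbers, plays the role of C): a series is
   its coefficient function on words. *)
Definition series (n : nat) := word n -> algC.

Definition charser (n : nat) (L : pred (word n)) : series n :=
  fun w => if L w then 1 else 0.

(* M_S = ({c_emptyset} U {c_s | s in S})^* *)
Definition M_lang (n : nat) (S : {set {set 'I_n}}) : pred (word n) :=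
  fun w => all (fun c => (c == set0) || (c \in S)) w.

Definition subfam (n : nat) (S : {set {set 'I_n}}) (E : {set 'I_n}) : bool :=
  [&& trivIset S, set0 \notin S & [forall s in S, s \subset E]].

Definition T_lang (n : nat) (E : {set 'I_n}) : pred (word n) :=
  fun w => [exists S : {set {set 'I_n}}, subfam S E && M_lang S w].

Definition complete_bell (k : nat) (a : nat -> algC) : algC :=
  \sum_(P : {set {set 'I_k}} | partition P [set: 'I_k]) \prod_(B in P) a #|B|.

Definition A (k : nat) : algC :=
  complete_bell k (fun i => if i == 1%N then 0 else 1).

(* Main.v *)
Require Import Defs.
From HB Require Import structures.
From mathcomp Require Import all_boot all_order all_algebra all_field.
From Stdlib Require Import FunctionalExtensionality.
Import Order.TTheory GRing.Theory Num.Theory.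
Set Implicit Arguments. Unset Strict Implicit. Unset Printing Implicit Defensive.
Local Open Scope ring_scope.

Definition nosing (T : finType) (P : {set {set T}}) := [forall B in P, #|B| != 1%N].
Definition NS (T : finType) (F : {set T}) :=
  [set P : {set {set T}} | partition P F && nosing P].

Lemma prod01 (T : finType) (P : {set {set T}}) :
  \prod_(B in P) (if #|B| == 1%N then 0 else 1 : algC) = if nosing P then 1 else 0.
Proof.
case: (boolP (nosing P)) => h.
  apply: big1 => B BP; move/forallP: h => /(_ B); rewrite BP /= => /negbTE -> //.
move/forallPn: h => [B]; rewrite negb_imply negbK => /andP[BP B1].
by rewrite (bigD1 B) //= B1 mul0r.
Qed.

Lemma sum1_set (T : finType) (p : pred T) :
  \sum_(i | p i) (1 : algC) = (#|[set i | p i]|)%:R.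
Proof.
rewrite -sumr_const; apply: eq_bigl => i; by rewrite inE.
Qed.

Lemma A_card k : A k = (#|NS [set: 'I_k]|)%:R.
Proof.
rewrite /A /complete_bell -sum1_set.
rewrite [LHS]big_mkcond [RHS]big_mkcond; apply: eq_bigr => P _ /=.
case: (partition P _) => //=; exact: prod01.
Qed.

Lemma NS_transport n (F : {set 'I_n}) : #|NS F| = #|NS [set: 'I_#|F|]|.
Proof.
pose f : 'I_#|F| -> 'I_n := @enum_val _ F.
have finj : injective f := @enum_val_inj _ F.
have himg : f @: setT = F.
  apply/setP => x; apply/imsetP/idP => [[i _ ->]|xF]; first exact: enum_valP.
  by exists (enum_rank_in xF x); rewrite ?inE // /f enum_rankK_in.
pose phi := fun P : {set {set 'I_#|F|}} => [set f @: (B : {set 'I_#|F|}) | B in P].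
have phiinj : injective phi := imset_inj (imset_inj finj).
rewrite -(card_in_imset (f := phi) (D := NS [set: 'I_#|F|])); last by move=> x y _ _; exact: phiinj.
apply: esym; apply: eq_card => Q; rewrite [Q \in NS F]inE; apply/imsetP/andP.
  move=> [P]; rewrite inE => /andP[pP nP] ->; split.
    by rewrite -himg /phi imset_partition.
  apply/forallP => B; apply/implyP => /imsetP[C CP ->].
  rewrite card_imset //; by move/forallP: nP => /(_ C); rewrite CP.
move=> [pQ nQ].
have key : phi [set f @^-1: (B : {set 'I_n}) | B in Q] = Q.
  rewrite /phi -imset_comp -[RHS]imset_id; apply: eq_in_imset => B BQ /=.
  have BF := partitionS pQ BQ.
  apply/setP => x; apply/imsetP/idP => [[i]|xB]; first by rewrite inE => iB ->.
  have xF : x \in F by apply: (subsetP BF).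
  by exists (enum_rank_in xF x); rewrite ?inE /f enum_rankK_in.
exists [set f @^-1: (B : {set 'I_n}) | B in Q]; last by rewrite key.
rewrite inE; apply/andP; split.
  by rewrite -(imset_partition _ _ finj) himg -/(phi _) key.
apply/forallP => B; apply/implyP => /imsetP[C CQ ->].
rewrite -(card_imset _ finj).
have -> : f @: (f @^-1: C) = C.
  have CF := partitionS pQ CQ.
  apply/setP => x; apply/imsetP/idP => [[i]|xB]; first by rewrite inE => iB ->.
  have xF : x \in F by apply: (subsetP CF).
  by exists (enum_rank_in xF x); rewrite ?inE /f enum_rankK_in.
by move/forallP: nQ => /(_ C); rewrite CQ.
Qed.

Definition Lw n (w : word n) : {set {set 'I_n}} := [set c | (c \in w) && (c != set0)].
Definition good n (X : {set 'I_n}) (Q : {set {set 'I_n}}) :=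
  [&& trivIset Q, set0 \notin Q, nosing Q & cover Q \subset X].

Lemma M_L n (w : word n) S : M_lang S w = (Lw w \subset S).
Proof.
apply/allP/subsetP => h c.
  rewrite inE => /andP[cw c0]; have := h c cw; by rewrite (negbTE c0).
move=> cw; case: eqP => //= /eqP c0; apply: h; by rewrite inE cw c0.
Qed.

Lemma count_good n (X : {set 'I_n}) :
  (\sum_(F : {set 'I_n} | F \subset X) #|NS F|)%N = #|[set Q | good X Q]|.
Proof.
rewrite -sum1_card (partition_big (fun Q => cover Q) (fun F => F \subset X)) /=; last first.
  by move=> Q; rewrite inE /good => /and4P[_ _ _ ->].
apply: eq_bigr => F FX; rewrite -sum1_card; apply: eq_bigl => Q; rewrite !inE.
rewrite /good /partition.
apply/andP/andP => [[/and3P[/eqP cF t s] ns]|[/and4P[t s ns cX] /eqP<-]].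
  by split; rewrite ?t ?s ?ns cF ?FX.
by split; rewrite ?eqxx ?t ?s.
Qed.

Lemma set1_neq0' (T : finType) (x : T) : ([set x] == set0) = false.
Proof. by apply/negP => /eqP h; have := cards1 x; rewrite h cards0. Qed.

Lemma bij n (L : {set {set 'I_n}}) (tL : trivIset L) (L0 : set0 \notin L) :
  #|[set S | partition S [set: 'I_n] & L \subset S]| = #|[set Q | good (~: cover L) Q]|.
Proof.
set X := ~: cover L.
pose f := fun S : {set {set 'I_n}} => [set B in S | (B \notin L) && (#|B| != 1%N)].
pose g := fun Q : {set {set 'I_n}} =>
  L :|: Q :|: [set [set x] | x in X :\: cover Q].
have fS : forall S, f S \subset S.
  by move=> S; apply/subsetP => B; rewrite inE => /andP[].
have f1 : forall S, partition S setT -> L \subset S -> good X (f S).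
  move=> S pS LS; have tS := partition_trivIset pS.
  apply/and4P; split.
  - exact: trivIsetS (fS S) tS.
  - by apply/negP; rewrite inE (partition0 pS).
  - by apply/forallP => B; apply/implyP; rewrite inE => /andP[_ /andP[_ ->]].
  apply/subsetP => x /bigcupP[B]; rewrite inE => /andP[BS /andP[BL _]] xB.
  rewrite inE; apply/bigcupP => [[C CL xC]].
  have CS := subsetP LS C CL.
  have e : B = C by rewrite -(def_pblock tS BS xB) (def_pblock tS CS xC).
  by move: BL; rewrite e CL.
have f2 : forall S, partition S setT -> L \subset S -> g (f S) = S.
  move=> S pS LS; have tS := partition_trivIset pS.
  apply/setP => B; apply/idP/idP.
    rewrite !inE => /orP[/orP[BL|]|].
    - exact: subsetP LS B BL.
    - by case/and3P.
    move=> /imsetP[x]; rewrite !inE => /andP[xfS xU] ->.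
    have xcS : x \in cover S by rewrite (cover_partition pS) inE.
    have CS := pblock_mem xcS.
    have xC : x \in pblock S x by rewrite mem_pblock.
    have CL : pblock S x \notin L.
      apply/negP => CL; move: xU => /negP; apply.
      by apply/bigcupP; exists (pblock S x).
    case: (boolP (#|pblock S x| == 1%N)) => [/cards1P[y hy]|h].
      by move: xC CS; rewrite hy inE => /eqP ->.
    move: xfS => /negP; case; apply/bigcupP; exists (pblock S x) => //.
    by rewrite inE CS CL h.
  move=> BS; rewrite !inE.
  case: (boolP (B \in L)) => BL //=.
  case: (boolP (#|B| == 1%N)) => [/cards1P[x hx]|h]; last by rewrite BS.
  apply/orP; right; rewrite hx; apply/imsetP; exists x => //.
  have xB : x \in B by rewrite hx inE.
  rewrite !inE; apply/andP; split.
    apply/negP => /bigcupP[D]; rewrite inE => /andP[DS /andP[_ hD]] xD.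
    have e : D = B by rewrite -(def_pblock tS DS xD) (def_pblock tS BS xB).
    by move: hD; rewrite e hx cards1.
  apply/negP => /bigcupP[C CL xC].
  have e : B = C by rewrite -(def_pblock tS BS xB) (def_pblock tS (subsetP LS C CL) xC).
  by move: BL; rewrite e CL.
have g3 : forall Q, good X Q -> partition (g Q) setT && (L \subset g Q).
  move=> Q /and4P[tQ sQ nQ cQ]; rewrite /g; apply/andP; split; last first.
    by rewrite -setUA subsetUl.
  apply/and3P; split.
  - rewrite eqEsubset subsetT /=; apply/subsetP => x _.
    case: (boolP (x \in cover L)) => [/bigcupP[C CL xC]|xU].
      by apply/bigcupP; exists C; rewrite // !inE CL.
    case: (boolP (x \in cover Q)) => [/bigcupP[C CQ xC]|xQ].
      by apply/bigcupP; exists C; rewrite // !inE CQ orbT.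
    apply/bigcupP; exists [set x]; last by rewrite inE.
    by rewrite inE; apply/orP; right; apply/imsetP; exists x; rewrite // !inE xQ xU.
  - apply: trivIsetU.
    + apply: trivIsetU => //.
      by rewrite disjoint_sym disjoints_subset; exact: cQ.
    + apply/trivIsetP => _ _ /imsetP[x _ ->] /imsetP[y _ ->] ne.
      by rewrite disjoints1 inE; apply: contra ne => /eqP->.
    rewrite disjoint_sym disjoints_subset; apply/subsetP => x /bigcupP[B /imsetP[y]].
    rewrite !inE => /andP[yQ yU] -> /[!inE] /eqP ->.
    apply/bigcupP => [[C]]; rewrite inE => /orP[CL yC|CQ yC].
      by move: yU => /negP; apply; apply/bigcupP; exists C.
    by move: yQ => /negP; apply; apply/bigcupP; exists C.
  rewrite !inE negb_or (negbTE L0) (negbTE sQ) /=.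
  by apply/imsetP => [[x _ /eqP]]; rewrite eq_sym set1_neq0'.
have g4 : forall Q, good X Q -> f (g Q) = Q.
  move=> Q /and4P[tQ sQ nQ cQ]; apply/setP => B; rewrite !inE.
  apply/idP/idP.
    move=> /andP[/orP[/orP[BL|BQ]|/imsetP[x _ ->]] /andP[nL n1]] //.
      by rewrite BL in nL.
    by rewrite cards1 in n1.
  move=> BQ; rewrite BQ orbT /=.
  have := forallP nQ B; rewrite BQ /= => ->; rewrite andbT.
  have : B != set0 by apply: contraNneq sQ => <-.
  case/set0Pn => x xB; apply/negP => BL.
  have : x \in cover Q by apply/bigcupP; exists B.
  move/(subsetP cQ); rewrite inE => /negP; apply; apply/bigcupP; exists B => //.
have -> : [set Q | good X Q] = f @: [set S | partition S [set: 'I_n] & L \subset S].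
  apply/setP => Q; rewrite inE; apply/idP/imsetP.
    move=> gQ; exists (g Q); last by rewrite g4.
    by rewrite inE; apply: g3.
  by move=> [S]; rewrite inE => /andP[pS LS] ->; apply: f1.
rewrite card_in_imset // => S1 S2; rewrite !inE => /andP[p1 l1] /andP[p2 l2] e.
by rewrite -(f2 _ p1 l1) -(f2 _ p2 l2) e.
Qed.

Theorem proposition1 (n : nat) :
  (fun w : word n =>
     \sum_(S : {set {set 'I_n}} | partition S [set: 'I_n]) charser (M_lang S) w)
  =
  (fun w : word n =>
     \sum_(E : {set 'I_n}) A (n - #|E|) * charser (T_lang E) w).
Proof.
apply: functional_extensionality => w.
set L := Lw w.
have L0 : set0 \notin L by rewrite inE eqxx andbF.
transitivity (\sum_(S : {set {set 'I_n}} | partition S [set: 'I_n])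
                 (if L \subset S then 1 else 0 : algC)).
  by apply: eq_bigr => S _; rewrite /charser M_L.
case: (boolP (trivIset L)) => tL; last first.
  have -> : \sum_(S : {set {set 'I_n}} | partition S [set: 'I_n])
                 (if L \subset S then 1 else 0 : algC) = 0.
    apply: big1 => S pS; case: ifP => // LS.
    by move: tL; rewrite (trivIsetS LS (partition_trivIset pS)).
  apply/esym; apply: big1 => E _; rewrite /charser.
  case: ifP => [/existsP[S /andP[/and3P[tS _ _] MS]]|_]; last by rewrite mulr0.
  by rewrite M_L in MS; move: tL; rewrite (trivIsetS MS tS).
have hT : forall E, T_lang E w = (cover L \subset E).
  move=> E; apply/existsP/idP => [[S /andP[/and3P[tS s0 aS] MS]]|UE].
    rewrite M_L in MS; apply/bigcupsP => c cL; have cS := subsetP MS c cL.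
    by move/forallP: aS => /(_ c); rewrite cS.
  exists L; rewrite M_L subxx andbT; apply/and3P; split => //.
  apply/forallP => c; apply/implyP => cL; apply: subset_trans UE.
  exact: bigcup_sup.
rewrite -big_mkcondr sum1_set bij // -count_good natr_sum.
rewrite [RHS](eq_bigr (fun E : {set 'I_n} => if cover L \subset E then A (n - #|E|) else 0));
  last by move=> E _; rewrite /charser hT; case: ifP; rewrite ?mulr1 ?mulr0.
rewrite -big_mkcond /= (reindex_inj (@setC_inj _)) /=.
apply: eq_big => F; first by rewrite setCS.
move=> _; have e : (n - #|F|)%N = #|~: F| by rewrite [RHS]cardsCs card_ord setCK.
by rewrite e A_card -NS_transport.
Qed.
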